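(* Let $b\ge1$ be an integer, $t\ge0$ an integer and $d=2t+1$. Let $\nu^{\text{on-diag}}$ be the number of pairs $(k,q)$ with $k$ odd, $1\le k<d$, $0\le q\le k$, $q\equiv0\pmod{2b}$. Then $\nu^{\text{on-diag}}=\tfrac{t^2}{2b}+\tfrac{t}{2}+c$, where $c=\tfrac{1}{2b}[t]_b\big([t]_b-2[t-\tfrac12]_b+b-1\big)$, and $0\le c\le b$.
   Context: For real $x$ and positive integer $y$, $[x]_y:=x\bmod y=x-y\lfloor x/y\rfloor$. *)

(* Defs.v *)
From Stdlib Require Import Reals Lra Lia Arith List Bool.
Import ListNotations.
Open Scope R_scope.

Definition rfloor (x : R) : Z := Int_part x.

(* [x]_y := x mod y = x - y * floor(x / y), for real x and positive integer y *)
Definition rmod (x : R) (y : nat) : R := x - INR y * IZR (rfloor (x / INR y)).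

Definition nu_ondiag (b t : nat) : nat :=
  let d := (2 * t + 1)%nat in
  length (filter (fun p : nat * nat =>
      let '(k, q) := p in
      Nat.odd k && Nat.leb 1 k && Nat.ltb k d && Nat.leb q k
      && Nat.eqb (q mod (2 * b)) 0)
    (list_prod (seq 0 d) (seq 0 d))).

Definition c_const (b t : nat) : R :=
  / (2 * INR b) * rmod (INR t) b
    * (rmod (INR t) b - 2 * rmod (INR t - / 2) b + INR b - 1).

(* Main.v *)
Require Import Defs.
From Stdlib Require Import Reals Lra Lia Arith List Bool.
Import ListNotations.
Open Scope R_scope.
Lemma tm_decomp (t b : nat) : (1 <= b)%nat -> t = (b * (t / b) + t mod b)%nat /\ (t mod b < b)%nat.
Proof. intros. split. apply Nat.div_mod_eq. apply Nat.mod_upper_bound. lia. Qed.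

Lemma div2_eq t b : (1 <= b)%nat -> ((2*t+1)/(2*b) = t/b)%nat.
Proof. intros Hb. destruct (tm_decomp t b Hb) as [E L].
  symmetry. apply (Nat.div_unique _ _ _ (2 * (t mod b) + 1)). lia.
  rewrite E at 1. nia. Qed.

Lemma count_mult (m N : nat) : (1 <= m)%nat ->
  length (filter (fun q => Nat.eqb (q mod m) 0) (seq 0 (S N))) = (N / m + 1)%nat.
Proof.
  intros Hm. induction N.
  - simpl. rewrite Nat.Div0.mod_0_l by lia. rewrite Nat.Div0.div_0_l by lia. reflexivity.
  - rewrite seq_S, filter_app, length_app, IHN. simpl.
    destruct (tm_decomp N m Hm) as [E L].
    destruct (Nat.eq_dec (N mod m + 1) m) as [H|H].
    + assert (Hd : (S N / m = N / m + 1)%nat).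
      { symmetry. apply (Nat.div_unique _ _ _ 0). lia. rewrite E at 1. nia. }
      assert (Hr : (S N mod m = 0)%nat).
      { symmetry. apply (Nat.mod_unique _ _ (N/m+1) 0). lia. rewrite E at 1. nia. }
      rewrite Hr, Hd. simpl. lia.
    + assert (Hd : (S N / m = N / m)%nat).
      { symmetry. apply (Nat.div_unique _ _ _ (N mod m + 1)). lia. rewrite E at 1. nia. }
      assert (Hr : (S N mod m = N mod m + 1)%nat).
      { symmetry. apply (Nat.mod_unique _ _ (N/m) (N mod m + 1)). lia. rewrite E at 1. nia. }
      rewrite Hr, Hd. replace (N mod m + 1 =? 0)%nat with false by (symmetry; apply Nat.eqb_neq; lia).
      simpl. lia.
Qed.

Fixpoint sumf (f : nat -> nat) (l : list nat) : nat :=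
  match l with [] => 0%nat | x :: l' => (f x + sumf f l')%nat end.

Lemma sumf_app f l1 l2 : sumf f (l1 ++ l2) = (sumf f l1 + sumf f l2)%nat.
Proof. induction l1; simpl; lia. Qed.

Lemma sumf_ext f g l : (forall x, In x l -> f x = g x) -> sumf f l = sumf g l.
Proof. induction l; simpl; intros; auto; try (rewrite H by auto; rewrite IHl; auto). Qed.

Lemma count_prod (A : Type) (f : nat * A -> bool) (l1 : list nat) (l2 : list A) :
  length (filter f (list_prod l1 l2)) = sumf (fun x => length (filter (fun y => f (x, y)) l2)) l1.
Proof.
  induction l1; simpl; auto.
  rewrite filter_app, length_app, IHl1. f_equal.
  all: try (clear; induction l2; simpl; auto; destruct (f (a, a0)); simpl; auto).
Qed.

Lemma filter_false_len (A : Type) (f : A -> bool) l : (forall x, In x l -> f x = false) -> length (filter f l) = 0%nat.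
Proof. induction l; simpl; intros; auto. rewrite H; auto. Qed.

Definition S_t b t := sumf (fun k => if Nat.odd k then (k / (2*b) + 1)%nat else 0%nat) (seq 0 (2*t+1)).

Lemma nu_S b t : (1 <= b)%nat -> nu_ondiag b t = S_t b t.
Proof.
  intros Hb. unfold nu_ondiag, S_t. rewrite count_prod. apply sumf_ext.
  intros k Hk. apply in_seq in Hk.
  replace (k <? 2*t+1)%nat with true by (symmetry; apply Nat.ltb_lt; lia).
  set (d := (2*t+1)%nat) in *. set (mm := (2*b)%nat) in *.
  destruct (Nat.odd k) eqn:Ho; simpl.
  - destruct k as [|k']. discriminate. simpl.
    replace (seq 0 d) with (seq 0 (S (S k')) ++ seq (S (S k')) (2*t+1 - S (S k'))).
    2:{ rewrite <- seq_app. f_equal. lia. }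
    rewrite filter_app, length_app.
    rewrite (filter_false_len _ _ (seq (S (S k')) _)).
    2:{ intros x Hx. apply in_seq in Hx. replace (x <=? S k')%nat with false by (symmetry; apply Nat.leb_gt; lia). reflexivity. }
    rewrite (filter_ext_in _ (fun q => Nat.eqb (q mod mm) 0)).
    2:{ intros x Hx. apply in_seq in Hx. replace (x <=? S k')%nat with true by (symmetry; apply Nat.leb_le; lia). reflexivity. }
    rewrite count_mult by (unfold mm; lia). lia.
  - apply filter_false_len. intros; reflexivity.
Qed.

Lemma S_closed b t : (1 <= b)%nat ->
  (2 * b * S_t b t = t * t + b * t + (t mod b) * (b - t mod b))%nat.
Proof.
  intros Hb. induction t.
  - unfold S_t. simpl. rewrite Nat.Div0.mod_0_l by lia. lia.
  - assert (E : S_t b (S t) = (S_t b t + (t / b + 1))%nat).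
    { unfold S_t. replace (2 * S t + 1)%nat with ((2*t+1) + 1 + 1)%nat by lia.
      rewrite !seq_app, !sumf_app. cbn [seq sumf Nat.add].
      replace (Nat.odd (2*t+1)) with true.
      replace (Nat.odd (2*t+1+1)) with false.
      rewrite div2_eq by auto. lia.
      replace (2*t+1+1)%nat with (2*(t+1))%nat by lia. rewrite Nat.odd_mul. reflexivity.
      rewrite Nat.odd_add, Nat.odd_mul. reflexivity. }
    rewrite E, Nat.mul_add_distr_l, IHt.
    destruct (tm_decomp t b Hb) as [Et L].
    set (m := (t / b)%nat) in *. set (r := (t mod b)%nat) in *.
    destruct (Nat.eq_dec (r + 1) b) as [H|H].
    + assert (Hr : (S t mod b = 0)%nat).
      { symmetry. apply (Nat.mod_unique _ _ (m+1) 0). lia. rewrite Et at 1. nia. }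
      rewrite Hr. replace (b - 0)%nat with b by lia. nia.
    + assert (Hr : (S t mod b = r + 1)%nat).
      { symmetry. apply (Nat.mod_unique _ _ m (r + 1)). lia. rewrite Et at 1. nia. }
      rewrite Hr. nia.
Qed.

Lemma int_part_unique x z : IZR z <= x < IZR z + 1 -> Int_part x = z.
Proof.
  intros [H1 H2]. destruct (base_Int_part x) as [A1 A2].
  assert (IZR z < IZR (Int_part x + 1)) by (rewrite plus_IZR; simpl; lra).
  assert (IZR (Int_part x) < IZR (z + 1)) by (rewrite plus_IZR; simpl; lra).
  apply lt_IZR in H. apply lt_IZR in H0. lia.
Qed.

Lemma frac_floor x z y B : 0 < B -> 0 <= y < B -> x = IZR z + y / B -> Int_part x = z.
Proof.
  intros HB Hy Hx. apply int_part_unique.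
  assert (0 <= y / B < 1).
  { split. unfold Rdiv; apply Rmult_le_pos; [lra| left; apply Rinv_0_lt_compat; lra].
    apply (Rmult_lt_reg_r B); [lra|]. unfold Rdiv. rewrite Rmult_assoc, Rinv_l by lra. lra. }
  lra.
Qed.

Theorem lemmaS11 (b t : nat) (hb : (1 <= b)%nat) :
  INR (nu_ondiag b t) = INR t ^ 2 / (2 * INR b) + INR t / 2 + c_const b t
  /\ 0 <= c_const b t <= INR b.
Proof.
  pose proof (S_closed b t hb) as HS. rewrite <- nu_S in HS by auto.
  destruct (tm_decomp t b hb) as [E L].
  set (m := (t / b)%nat) in *. set (r := (t mod b)%nat) in *.
  set (nu := nu_ondiag b t) in *.
  assert (HB : 0 < INR b) by (apply lt_0_INR; lia).
  assert (HR : 0 <= INR r) by apply pos_INR.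
  assert (HRB : INR r + 1 <= INR b) by (rewrite <- S_INR; apply le_INR; lia).
  assert (Ht : INR t = INR b * INR m + INR r) by (rewrite E at 1; rewrite plus_INR, mult_INR; reflexivity).
  assert (Hnu : INR nu = (INR t * INR t + INR b * INR t + INR r * (INR b - INR r)) / (2 * INR b)).
  { apply (f_equal INR) in HS. rewrite !mult_INR, !plus_INR, !mult_INR, minus_INR in HS by lia.
    simpl in HS. rewrite <- HS. field. lra. }
  assert (Hm1 : rmod (INR t) b = INR r).
  { unfold rmod, rfloor. rewrite (frac_floor _ (Z.of_nat m) (INR r) (INR b)); try lra.
    rewrite <- INR_IZR_INZ. lra. rewrite <- INR_IZR_INZ, Ht. field. lra. }
  assert (Hc : c_const b t = INR r * (INR b - INR r) / (2 * INR b)).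
  { unfold c_const. rewrite Hm1. destruct (Nat.eq_dec r 0) as [H0|H0].
    - rewrite H0. simpl. field. lra.
    - assert (HR1 : 1 <= INR r) by (apply (le_INR 1); lia).
      assert (Hm2 : rmod (INR t - / 2) b = INR r - / 2).
      { unfold rmod, rfloor. rewrite (frac_floor _ (Z.of_nat m) (INR r - / 2) (INR b)); try lra.
        rewrite <- INR_IZR_INZ. lra. rewrite <- INR_IZR_INZ, Ht. field. lra. }
      rewrite Hm2. field. lra. }
  split.
  - rewrite Hnu, Hc. field. lra.
  - rewrite Hc. split.
    + unfold Rdiv; apply Rmult_le_pos; [nra| left; apply Rinv_0_lt_compat; lra].
    + apply (Rmult_le_reg_r (2 * INR b)); [lra|]. unfold Rdiv. rewrite Rmult_assoc, Rinv_l by lra. nra.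
Qed.
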